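(* Let $f\in\mathbb{Q}[x]$ have degree $n$ and $g\in\mathbb{Q}[x]$ have degree $\le 2n-2$. Let $Q^*\in S^n(\mathbb{R})$ be positive definite with smallest eigenvalue $\sigma>0$, let $q^*\in\mathbb{R}[x]$ have degree $\le n-2$, and suppose $\rho:=\|\mathbf{x}^TQ^*\mathbf{x}+q^*f-g\|<\sigma$. Let $$0<\delta<\frac{\sigma-\rho}{n+(n-1)\sqrt n\,\|f\|}.$$ Then for every $\overline Q\in S^n(\mathbb{Q})$ and every $q\in\mathbb{Q}[x]$ of degree $\le n-2$ with $|\overline Q_{i,j}-Q^*_{i,j}|\le\delta$ for all $1\le i,j\le n$ and $|q_i-q^*_i|\le\delta$ for all $0\le i\le n-2$ (coefficients of $x^i$), the matrix $Q:=\pi_{g-qf}(\overline Q)\in S^n(\mathbb{Q})$ satisfies $g=\mathbf{x}^TQ\,\mathbf{x}+q\,f$ and is positive definite.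
   Context: $S^n(\mathbb{R})$ (resp. $S^n(\mathbb{Q})$) denotes real (resp. rational) symmetric $n\times n$ matrices; $\mathbf{x}=[1,x,\dots,x^{n-1}]^T$; $\|\cdot\|$ denotes the $2$-norm of the coefficient vector of a polynomial and the Frobenius norm of a matrix. For $p=\sum_{k=0}^{2n-2}p_kx^k$, $Q_p$ is the symmetric Hankel matrix with $(Q_p)_{i,j}=p_{i+j-2}/s_{i+j-2}$, where $s_k=k+1$ for $0\le k\le n-1$ and $s_k=2n-1-k$ for $n-1\le k\le 2n-2$; and $\pi_p(Q)=Q-Q_{\mathbf{x}^TQ\mathbf{x}-p}$ for $Q\in S^n(\mathbb{R})$. *)

(* Defs.v *)
From HB Require Import structures.
From mathcomp Require Import all_boot all_order all_algebra.
From mathcomp Require Import reals.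
Set Implicit Arguments. Unset Strict Implicit. Unset Printing Implicit Defensive.
Import Order.TTheory GRing.Theory Num.Theory.
Local Open Scope ring_scope.

(* x^T Q x with x = [1, x, ..., x^(n-1)]^T (0-based indices: x_i = x^i). *)
Definition xQx (F : comRingType) (n : nat) (Q : 'M[F]_n) : {poly F} :=
  \sum_(i < n) \sum_(j < n) Q i j *: 'X^(i + j).

Definition polynorm (R : rcfType) (p : {poly R}) : R :=
  Num.sqrt (\sum_(i < size p) p`_i ^+ 2).

Definition sk (n k : nat) : nat := if (k < n)%N then k.+1 else (n.*2.-1 - k)%N.

Definition Qmat (F : fieldType) (n : nat) (p : {poly F}) : 'M[F]_n :=
  \matrix_(i < n, j < n) (p`_(i + j) / (sk n (i + j))%:R).

Definition proj_pi (F : fieldType) (n : nat) (p : {poly F}) (Q : 'M[F]_n) : 'M[F]_n :=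
  Q - Qmat n (xQx Q - p).

Definition posdef (R : numDomainType) (n : nat) (A : 'M[R]_n) : Prop :=
  forall v : 'cV[R]_n, v != 0 -> 0 < (v^T *m A *m v) 0 0.

Definition smallest_eigenvalue (R : realFieldType) (n : nat) (A : 'M[R]_n) (s : R) : Prop :=
  eigenvalue A s /\ forall a : R, eigenvalue A a -> s <= a.

(* Main.v *)
Require Import Defs.
From HB Require Import structures.
From mathcomp Require Import all_boot all_order all_algebra.
From mathcomp Require Import reals.
From mathcomp Require Import complex.
From mathcomp Require Import zify ring lra.
Set Implicit Arguments. Unset Strict Implicit. Unset Printing Implicit Defensive.
Import Order.TTheory GRing.Theory Num.Theory.
Local Open Scope ring_scope.


Section SpecC.
Local Open Scope sesquilinear_scope.
Lemma spec_C (C : numClosedFieldType) n (A : 'M[C]_n) (s : C) :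
  A \is normalmx -> (forall k, s <= spectral_diag A 0 k) ->
  forall w : 'cV[C]_n, s * (w ^t Num.conj *m w) 0 0 <= (w ^t Num.conj *m A *m w) 0 0.
Proof.
move=> An Hs w.
have Pu : spectralmx A \is unitarymx := spectral_unitarymx A.
have PtP : (spectralmx A) ^t Num.conj *m spectralmx A = 1%:M.
  by rewrite -invmx_unitary // mulVmx ?spectral_unit.
set P := spectralmx A in Pu PtP *; set d := spectral_diag A in Hs *.
have AE : A = invmx P *m diag_mx d *m P by apply/orthomx_spectralP.
set y := P *m w.
have yt : y ^t Num.conj = w ^t Num.conj *m P ^t Num.conj by rewrite /y trmx_mul map_mxM.
have e1 : w ^t Num.conj *m w = y ^t Num.conj *m y by rewrite yt -mulmxA (mulmxA _ P) PtP mul1mx.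
have e2 : w ^t Num.conj *m A *m w = y ^t Num.conj *m diag_mx d *m y.
  by rewrite AE invmx_unitary // yt /y !mulmxA.
rewrite e1 e2 !mxE mulr_sumr; apply: ler_sum => k _.
rewrite mul_mx_diag !mxE.
rewrite mulrAC [_ * d 0 k]mulrC.
apply: ler_wpM2r; last exact: Hs.
rewrite mulrC -normCK; exact: exprn_ge0.
Qed.
End SpecC.

Section SpecR.
Local Open Scope sesquilinear_scope.
Lemma eig_diag (C : numClosedFieldType) n (A : 'M[C]_n) k :
  A \is normalmx -> eigenvalue A (spectral_diag A 0 k).
Proof.
move=> An; have AE : A = invmx (spectralmx A) *m diag_mx (spectral_diag A) *m spectralmx A
  by apply/orthomx_spectralP.
apply/eigenvalueP; exists (delta_mx 0 k *m spectralmx A).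
  rewrite {2}AE !mulmxA mulmxK ?spectral_unit //.
  rewrite scalemxAl mul_mx_diag; congr (_ *m _); apply/rowP => j.
  rewrite !mxE eqxx /=; case: (eqVneq j k) => [->|_];
    by rewrite ?mulr1n ?mulr0n ?mulr1 ?mulr0 ?mul1r ?mul0r.
rewrite mulmx_free_eq0; last by rewrite row_free_unit spectral_unit.
apply/eqP => /rowP/(_ k); rewrite !mxE !eqxx /= => /eqP; by rewrite oner_eq0.
Qed.

Lemma spec_R (R : rcfType) n (A : 'M[R]_n) (s : R) : A^T = A ->
  (forall a, eigenvalue A a -> s <= a) ->
  forall v : 'cV[R]_n, s * (v^T *m v) 0 0 <= (v^T *m A *m v) 0 0.
Proof.
move=> Asym Hs v.
pose f := real_complex R.
pose AC := map_mx f A.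
have Ar : AC \is a realmx.
  by apply/mxOverP => i j; rewrite mxE; apply/complex_realP; exists (A i j).
have As : AC \is symmetricmx.
  by apply/is_hermitianmxP; rewrite expr0 scale1r map_mx_id // /AC map_trmx Asym.
have Ah := realsym_hermsym As Ar.
have An := hermitian_normalmx Ah.
have dr := hermitian_spectral_diag_real Ah.
have := spec_C (s := f s) An _ (map_mx f v).
have cv : (map_mx f v) ^t Num.conj = (map_mx f v)^T.
  apply/matrixP => i j; rewrite !mxE; apply: conj_Creal.
  by apply/complex_realP; exists (v j i).
rewrite cv map_trmx -!map_mxM !mxE -rmorphM lecR; apply => k.
have /complex_realP [r dr'] : spectral_diag AC 0 k \is Num.real by exact: (mxOverP dr).
rewrite dr' lecR; apply: Hs.
have := eig_diag k An; rewrite dr' !eigenvalue_root_char /AC -map_char_poly.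
by rewrite fmorph_root.
Qed.
End SpecR.


Lemma cnt_lt n m : (\sum_(i < n) (i < m : nat) = minn n m)%N.
Proof.
elim: n => [|n IH]; first by rewrite big_ord0 min0n.
rewrite big_ord_recr /= IH; case: (ltnP n m) => h /=; lia.
Qed.

Lemma inner_cnt n i k : (\sum_(j < n) (i + j == k : nat) = ((i <= k) && (k < i + n)))%N.
Proof.
case: (boolP ((i <= k)%N && (k < i + n)%N)) => [/andP[h1 h2]|h].
  have hk : (k - i < n)%N by lia.
  rewrite (bigD1 (Ordinal hk)) //= big1 => [|j /eqP hj]; first by rewrite subnKC // eqxx.
  case: (eqVneq (i + j) k) => // e; exfalso; apply: hj; apply: val_inj => /=; lia.
rewrite big1 // => j _; case: (eqVneq (i + j) k) => // e.
by move: h; rewrite -e leq_addr ltn_add2l ltn_ord.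
Qed.

Lemma count_sk n k : (\sum_(i < n) \sum_(j < n) (i + j == k : nat) =
  if k < (n.*2).-1 then sk n k else 0)%N.
Proof.
under eq_bigr => i _ do rewrite inner_cnt.
have e : forall i : 'I_n, ((i < k.+1 : nat) = ((i <= k)%N && (k < i + n)%N) + (i < k.+1 - n)%N)%N.
  move=> i; case: (leqP i k) => h1; case: (ltnP k (i + n)) => h2 /=; lia.
have := cnt_lt n k.+1; rewrite (eq_bigr (fun i : 'I_n => ((i <= k)%N && (k < i + n)%N) + (i < k.+1 - n)%N)%N); last by move=> i _; exact: e.
rewrite (big_split _ _ _ (fun i : 'I_n => ((i <= k)%N && (k < i + n)%N) : nat)) /= cnt_lt => h.
rewrite /sk; case: (ltnP k n) => h3; case: (ltnP k (n.*2).-1) => h4; lia.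
Qed.

Lemma coef_xQx (F : comNzRingType) n (Q : 'M[F]_n) k :
  (xQx Q)`_k = \sum_(i < n) \sum_(j < n) Q i j * ((i + j)%N == k)%:R.
Proof.
rewrite /xQx coef_sum; apply: eq_bigr => i _; rewrite coef_sum; apply: eq_bigr => j _.
by rewrite coefZ coefXn eq_sym.
Qed.

Lemma xQx_ones (F : comNzRingType) n k :
  (xQx (const_mx 1 : 'M[F]_n))`_k = (if k < (n.*2).-1 then sk n k else 0)%N%:R.
Proof.
rewrite coef_xQx -count_sk natr_sum; apply: eq_bigr => i _; rewrite natr_sum.
by apply: eq_bigr => j _; rewrite mxE mul1r.
Qed.

Lemma sum_delta (F : pzSemiRingType) N (phi : nat -> F) m : (m < N)%N ->
  \sum_(k < N) phi k * (m == k)%:R = phi m.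
Proof.
move=> h; rewrite (bigD1 (Ordinal h)) //= eqxx mulr1 big1 ?addr0 // => k hk.
case: (eqVneq m k) => [e|]; last by rewrite mulr0.
by exfalso; move/eqP: hk; apply; apply: val_inj.
Qed.

Lemma regroup (F : comNzRingType) n (M : 'M[F]_n) (phi : nat -> F) :
  \sum_(i < n) \sum_(j < n) M i j * phi (i + j)%N =
  \sum_(k < (n.*2).-1) phi k * (xQx M)`_k.
Proof.
under [RHS]eq_bigr => k _ do rewrite coef_xQx mulr_sumr.
rewrite [RHS]exchange_big; apply: eq_bigr => i _.
under [RHS]eq_bigr => k _ do rewrite mulr_sumr.
rewrite [RHS]exchange_big; apply: eq_bigr => j _.
under [RHS]eq_bigr => k _ do rewrite mulrCA.
rewrite -mulr_sumr sum_delta //.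
have := ltn_ord i; have := ltn_ord j; lia.
Qed.

Lemma sk_gt0 n k : (k < (n.*2).-1)%N -> (0 < sk n k)%N.
Proof. rewrite /sk; case: ifP => //; lia. Qed.

Lemma xQx_Qmat (F : numFieldType) n (p : {poly F}) : (size p <= (n.*2).-1)%N ->
  xQx (Qmat n p) = p.
Proof.
move=> hp; apply/polyP => k; rewrite coef_xQx.
transitivity (\sum_(i < n) \sum_(j < n) (p`_k / (sk n k)%:R) * (const_mx 1 : 'M[F]_n) i j * ((i + j)%N == k)%:R).
  apply: eq_bigr => i _; apply: eq_bigr => j _; rewrite !mxE mulr1.
  by case: (eqVneq (i + j)%N k) => [->|]; rewrite ?mulr0 ?mulr1.
under eq_bigr => i _ do under eq_bigr => j _ do rewrite -mulrA.
under eq_bigr => i _ do rewrite -mulr_sumr.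
rewrite -mulr_sumr -coef_xQx xQx_ones.
case: ifP => hk.
  by rewrite mulfVK // pnatr_eq0 -lt0n sk_gt0.
rewrite mulr0; apply/esym/(leq_sizeP _ _ (leq_trans hp (leqnn _))); by rewrite leqNgt hk.
Qed.


Definition qf (F : pzRingType) n (v : 'cV[F]_n) (M : 'M[F]_n) :=
  \sum_(i < n) \sum_(j < n) v i 0 * M i j * v j 0.
Definition frob2 (F : pzRingType) n (M : 'M[F]_n) := \sum_(i < n) \sum_(j < n) M i j ^+ 2.
Definition vn2 (F : pzRingType) n (v : 'cV[F]_n) := \sum_(i < n) v i 0 ^+ 2.

Lemma qfE (F : comPzRingType) n (v : 'cV[F]_n) (M : 'M[F]_n) :
  (v^T *m M *m v) 0 0 = qf v M.
Proof.
rewrite /qf mxE exchange_big; apply: eq_bigr => j _.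
rewrite mxE mulr_suml; apply: eq_bigr => i _; by rewrite !mxE.
Qed.

Lemma vn2E (F : comPzRingType) n (v : 'cV[F]_n) : (v^T *m v) 0 0 = vn2 v.
Proof. by rewrite mxE; apply: eq_bigr => i _; rewrite mxE expr2. Qed.

Lemma CS (R : realFieldType) (I : finType) (a b : I -> R) :
  (\sum_i a i * b i) ^+ 2 <= (\sum_i a i ^+ 2) * (\sum_i b i ^+ 2).
Proof.
rewrite expr2 mulr_suml mulr_suml.
under eq_bigr => i _ do rewrite mulr_sumr.
under [X in _ <= X]eq_bigr => i _ do rewrite mulr_sumr.
set L := \sum_i _; set Rr := \sum_i _.
have h : L + L <= Rr + Rr.
  rewrite {2}/Rr exchange_big /= /L /Rr -!big_split /=.
  apply: ler_sum => i _; rewrite -!big_split /=; apply: ler_sum => j _.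
  have := sqr_ge0 (a i * b j - a j * b i); nra.
lra.
Qed.

Lemma qf_sq (R : realFieldType) n (v : 'cV[R]_n) (M : 'M[R]_n) :
  qf v M ^+ 2 <= frob2 M * vn2 v ^+ 2.
Proof.
have e1 : qf v M = \sum_(p : 'I_n * 'I_n) M p.1 p.2 * (v p.1 0 * v p.2 0).
  rewrite /qf pair_bigA; apply: eq_bigr => p _; ring.
have e2 : vn2 v ^+ 2 = \sum_(p : 'I_n * 'I_n) (v p.1 0 * v p.2 0) ^+ 2.
  rewrite /vn2 expr2 mulr_suml; under eq_bigr => i _ do rewrite mulr_sumr.
  rewrite pair_bigA; apply: eq_bigr => p _; ring.
rewrite e1 e2 /frob2 pair_bigA; exact: CS.
Qed.

Lemma vn2_ge0 (R : realFieldType) n (v : 'cV[R]_n) : 0 <= vn2 v.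
Proof. by apply: sumr_ge0 => i _; apply: sqr_ge0. Qed.

Lemma frob2_ge0 (R : realFieldType) n (M : 'M[R]_n) : 0 <= frob2 M.
Proof. by apply: sumr_ge0 => i _; apply: sumr_ge0 => j _; apply: sqr_ge0. Qed.

Lemma qf_bound (R : realFieldType) n (v : 'cV[R]_n) (M : 'M[R]_n) B :
  0 <= B -> frob2 M <= B ^+ 2 -> `|qf v M| <= B * vn2 v.
Proof.
move=> hB hM.
have h : `|qf v M| ^+ 2 <= (B * vn2 v) ^+ 2.
  rewrite real_normK ?num_real // exprMn.
  apply: (le_trans (qf_sq v M)); apply: ler_wpM2r => //.
  by rewrite exprn_ge0 // vn2_ge0.
rewrite -(@ler_pXn2r _ 2) // ?nnegrE //.
by rewrite mulr_ge0 // vn2_ge0.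
Qed.


Definition pn2 (R : nzRingType) (p : {poly R}) := \sum_(k < size p) p`_k ^+ 2.

Lemma pn2_ge0 (R : realFieldType) (p : {poly R}) : 0 <= pn2 p.
Proof. by apply: sumr_ge0 => i _; apply: sqr_ge0. Qed.

Lemma polynorm_sq (R : rcfType) (p : {poly R}) : polynorm p ^+ 2 = pn2 p.
Proof. by rewrite /polynorm sqr_sqrtr // pn2_ge0. Qed.

Lemma polynorm_ge0 (R : rcfType) (p : {poly R}) : 0 <= polynorm p.
Proof. exact: sqrtr_ge0. Qed.

Lemma sum_widen_le (R : realFieldType) N M (f : nat -> R) : (N <= M)%N ->
  (forall k, 0 <= f k) -> \sum_(k < N) f k <= \sum_(k < M) f k.
Proof.
move=> hNM hf; rewrite (big_ord_widen _ _ hNM) [X in _ <= X](bigID (fun k : 'I_M => (k < N)%N)) /=.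
by rewrite lerDl sumr_ge0.
Qed.

Lemma sum_zero_ext (R : nzRingType) N M (f : nat -> R) : (N <= M)%N ->
  (forall k, (N <= k)%N -> f k = 0) -> \sum_(k < M) f k = \sum_(k < N) f k.
Proof.
move=> hNM hf; rewrite (big_ord_widen _ _ hNM) [LHS](bigID (fun k : 'I_M => (k < N)%N)) /=.
by rewrite [X in _ + X]big1 ?addr0 // => k; rewrite -leqNgt => /hf.
Qed.

Lemma sum_le_pn2 (R : realFieldType) N (p : {poly R}) : \sum_(k < N) p`_k ^+ 2 <= pn2 p.
Proof.
apply: (le_trans (sum_widen_le (leq_maxl N (size p)) (fun k => sqr_ge0 _))).
rewrite (@sum_zero_ext _ (size p) _ (fun k => p`_k ^+ 2)) ?leq_maxr // => k hk.
by rewrite nth_default // expr0n.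
Qed.

Lemma sum_shift_le (R : realFieldType) N i (p : {poly R}) :
  \sum_(k < N) ('X^i * p)`_k ^+ 2 <= pn2 p.
Proof.
pose M := maxn N (size p).
have hN : (N <= i + M)%N by rewrite /M; lia.
apply: (le_trans (sum_widen_le hN (fun k => sqr_ge0 _))).
rewrite big_split_ord /= big1 ?add0r => [|k _]; last by rewrite coefXnM ltn_ord expr0n.
under eq_bigr => k _ do rewrite coefXnM ltnNge leq_addr /= addKn.
rewrite (@sum_zero_ext _ (size p) M (fun k => p`_k ^+ 2)) ?leq_maxr //.
by move=> k hk; rewrite nth_default // expr0n.
Qed.

Lemma frob2_Qmat (R : realFieldType) n (p : {poly R}) :
  frob2 (Qmat n p) <= \sum_(k < (n.*2).-1) p`_k ^+ 2.
Proof.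
have e : frob2 (Qmat n p) = \sum_(i < n) \sum_(j < n) (const_mx 1 : 'M[R]_n) i j *
   (fun k => (p`_k / (sk n k)%:R) ^+ 2) (i + j)%N.
  by apply: eq_bigr => i _; apply: eq_bigr => j _; rewrite !mxE mul1r.
rewrite e (regroup _ (fun k => (p`_k / (sk n k)%:R) ^+ 2)); apply: ler_sum => k _.
rewrite xQx_ones ltn_ord.
have hs : (0 < sk n k)%N by apply: sk_gt0.
have hs' : (1 <= (sk n k)%:R :> R) by rewrite ler1n.
have hs0 : (0 < (sk n k)%:R :> R) by rewrite ltr0n.
rewrite ?mul1r.
have -> : (p`_k / (sk n k)%:R) ^+ 2 * (sk n k)%:R = p`_k ^+ 2 / (sk n k)%:R.
  by field; rewrite gt_eqF.
by rewrite ler_pdivrMr // ler_peMr // sqr_ge0.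
Qed.

Lemma frob2_proj (R : realFieldType) n (D : 'M[R]_n) :
  frob2 (D - Qmat n (xQx D)) <= frob2 D.
Proof.
pose c k := (xQx D)`_k / (sk n k)%:R.
pose S := \sum_(k < (n.*2).-1) c k ^+ 2 * (sk n k)%:R.
have eA : \sum_(i < n) \sum_(j < n) D i j * c (i + j)%N = S.
  rewrite (regroup D c); apply: eq_bigr => k _.
  have hs0 : ((sk n k)%:R : R) != 0 by rewrite pnatr_eq0 -lt0n sk_gt0.
  by rewrite /c; field.
have eB : \sum_(i < n) \sum_(j < n) (const_mx 1 : 'M[R]_n) i j * (fun k => c k ^+ 2) (i + j)%N = S.
  rewrite (regroup _ (fun k => c k ^+ 2)); apply: eq_bigr => k _.
  by rewrite xQx_ones ltn_ord.
have hS : 0 <= S.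
  by apply: sumr_ge0 => k _; rewrite mulr_ge0 ?sqr_ge0 ?ler0n.
have e : frob2 (D - Qmat n (xQx D)) = frob2 D - 2 * S + S.
  rewrite -{1}eA -eB /frob2 mulr_sumr -sumrB -big_split /=; apply: eq_bigr => i _.
  rewrite mulr_sumr -sumrB -big_split /=; apply: eq_bigr => j _.
  rewrite !mxE /c; ring.
rewrite e; lra.
Qed.


Lemma QmatD (F : fieldType) n (p q : {poly F}) : Qmat n (p + q) = Qmat n p + Qmat n q.
Proof. by apply/matrixP => i j; rewrite !mxE coefD mulrDl. Qed.
Lemma QmatZ (F : fieldType) n a (p : {poly F}) : Qmat n (a *: p) = a *: Qmat n p.
Proof. by apply/matrixP => i j; rewrite !mxE coefZ mulrA. Qed.
Lemma Qmat0 (F : fieldType) n : Qmat n (0 : {poly F}) = 0.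
Proof. by apply/matrixP => i j; rewrite !mxE coef0 mul0r. Qed.
Lemma Qmat_tr (F : fieldType) n (p : {poly F}) : (Qmat n p)^T = Qmat n p.
Proof. by apply/matrixP => i j; rewrite !mxE addnC. Qed.

Lemma xQxB (F : comNzRingType) n (A B : 'M[F]_n) : xQx (A - B) = xQx A - xQx B.
Proof.
rewrite /xQx -sumrB; apply: eq_bigr => i _; rewrite -sumrB; apply: eq_bigr => j _.
by rewrite !mxE scalerBl.
Qed.

Lemma map_xQx (R : numFieldType) n (A : 'M[rat]_n) :
  map_poly (@ratr R) (xQx A) = xQx (map_mx ratr A).
Proof.
rewrite /xQx rmorph_sum; apply: eq_bigr => i _; rewrite rmorph_sum; apply: eq_bigr => j _.
by rewrite /= map_polyZ map_polyXn mxE.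
Qed.

Lemma map_Qmat (R : numFieldType) n (p : {poly rat}) :
  map_mx (@ratr R) (Qmat n p) = Qmat n (map_poly ratr p).
Proof. by apply/matrixP => i j; rewrite !mxE coef_map fmorph_div rmorph_nat. Qed.

Lemma poly_expand (F : nzRingType) N (h : {poly F}) : (size h <= N)%N ->
  h = \sum_(i < N) h`_i *: 'X^i.
Proof.
move=> hs; rewrite -poly_def; apply/polyP => k; rewrite coef_poly.
case: ltnP => // hk; rewrite nth_default //; exact: leq_trans hs hk.
Qed.

Lemma size_xQx (F : comNzRingType) n (A : 'M[F]_n) : (size (xQx A) <= (n.*2).-1)%N.
Proof.
apply/leq_sizeP => k hk; rewrite coef_xQx big1 // => i _; rewrite big1 // => j _.
have : ((i + j)%N == k) = false by apply/negbTE; have := ltn_ord i; have := ltn_ord j; lia.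
by move->; rewrite mulr0.
Qed.

Lemma qfD (R : comNzRingType) n (v : 'cV[R]_n) A B : qf v (A + B) = qf v A + qf v B.
Proof. by rewrite -!qfE mulmxDr mulmxDl mxE. Qed.
Lemma qfN (R : comNzRingType) n (v : 'cV[R]_n) A : qf v (- A) = - qf v A.
Proof. by rewrite -!qfE mulmxN mulNmx mxE. Qed.
Lemma qfZ (R : comNzRingType) n (v : 'cV[R]_n) a A : qf v (a *: A) = a * qf v A.
Proof. by rewrite -!qfE -scalemxAr -scalemxAl mxE. Qed.
Lemma qf0 (R : comNzRingType) n (v : 'cV[R]_n) : qf v 0 = 0.
Proof. by rewrite /qf big1 // => i _; rewrite big1 // => j _; rewrite mxE mulr0 mul0r. Qed.

Lemma qf4 (R : comNzRingType) n (v : 'cV[R]_n) A B C E :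
  qf v (A + B - C - E) = qf v A + qf v B - qf v C - qf v E.
Proof. by rewrite !qfD !qfN. Qed.

Lemma sum_const1 (R : pzRingType) n (c : R) : \sum_(i < n) c = n%:R * c.
Proof. by rewrite sumr_const card_ord mulr_natl. Qed.

Lemma size_aux a n : (a <= n.-1)%N -> ((a + n.+1).-1 <= (n.*2).-1)%N.
Proof. lia. Qed.

Theorem mainTheorem10 (R : realType) (n : nat) (f g : {poly rat})
  (Qs : 'M[R]_n) (sigma : R) (qs : {poly R}) (delta : R) :
  size f = n.+1 ->
  (size g <= (n.*2).-1)%N ->
  Qs^T = Qs ->
  posdef Qs ->
  smallest_eigenvalue Qs sigma ->
  0 < sigma ->
  (size qs <= n.-1)%N ->
  polynorm (xQx Qs + qs * map_poly ratr f - map_poly ratr g) < sigma ->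
  0 < delta ->
  delta < (sigma - polynorm (xQx Qs + qs * map_poly ratr f - map_poly ratr g))
          / (n%:R + (n.-1)%:R * Num.sqrt (n%:R) * polynorm (map_poly (@ratr R) f)) ->
  forall (Qb : 'M[rat]_n) (q : {poly rat}),
    Qb^T = Qb ->
    (size q <= n.-1)%N ->
    (forall i j : 'I_n, `|ratr (Qb i j) - Qs i j| <= delta) ->
    (forall i : nat, (i < n.-1)%N -> `|ratr q`_i - qs`_i| <= delta) ->
    let Q := proj_pi (g - q * f) Qb in
    Q^T = Q /\ g = xQx Q + q * f /\ posdef (map_mx (@ratr R) Q).
Proof.
move=> hf hg Qsym _ [_ hsig] sig0 hqs hrho hdel hdelt Qb q Qbsym hq hQ hqc Q.
set F := map_poly (@ratr R) f; set G := map_poly (@ratr R) g.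
set r := xQx Qs + qs * F - G.
set rho := polynorm r.
have hp : (size (xQx Qb - (g - q * f))%R <= (n.*2).-1)%N.
  apply: (leq_trans (size_polyD _ _)); rewrite geq_max size_xQx /= size_polyN.
  apply: (leq_trans (size_polyD _ _)); rewrite geq_max hg size_polyN /=.
  apply: (leq_trans (size_polyMleq _ _)); by rewrite hf size_aux.
have eQ : xQx Q = g - q * f.
  by rewrite /Q /proj_pi xQxB xQx_Qmat // opprB addrC subrK.
split; first by rewrite /Q /proj_pi linearB /= Qbsym Qmat_tr.
split; first by rewrite eQ subrK.
move=> v vn0.
pose QbR := map_mx (@ratr R) Qb. pose D := QbR - Qs. pose h := map_poly (@ratr R) q - qs.
have ep : map_poly (@ratr R) (xQx Qb - (g - q * f)) = xQx D + r + h * F.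
  rewrite !rmorphB rmorphM /= map_xQx /D xQxB /r /h -/F -/G; ring.
have eQR : map_mx (@ratr R) Q = Qs + (D - Qmat n (xQx D)) - Qmat n r - Qmat n (h * F).
  rewrite /Q /proj_pi map_mxB map_Qmat ep !QmatD.
  by apply/matrixP => i j; rewrite !mxE; ring.
have hv : 0 < vn2 v.
  rewrite lt_def vn2_ge0 andbT; apply: contra vn0 => /eqP h0.
  apply/eqP/matrixP => i j; rewrite ord1 mxE.
  have := @psumr_eq0P _ _ _ _ (fun i _ => sqr_ge0 (v i 0)) h0 i isT.
  by move/eqP; rewrite sqrf_eq0 => /eqP.
have b0 : sigma * vn2 v <= qf v Qs by rewrite -qfE -vn2E; apply: spec_R.
have b1 : `|qf v (D - Qmat n (xQx D))| <= n%:R * delta * vn2 v.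
  apply: qf_bound; first by rewrite mulr_ge0 // ltW.
  apply: le_trans (frob2_proj D) _.
  rewrite /frob2; apply: (@le_trans _ _ (\sum_(i < n) \sum_(j < n) delta ^+ 2)).
    apply: ler_sum => i _; apply: ler_sum => j _.
    rewrite /D !mxE -real_normK ?num_real // ler_pXn2r ?nnegrE ?normr_ge0 ?(ltW hdel) //; exact: hQ.
  by rewrite !sum_const1 exprMn [_%:R ^+ 2]expr2 mulrA.
have b2 : `|qf v (Qmat n r)| <= rho * vn2 v.
  apply: qf_bound; first exact: polynorm_ge0.
  rewrite /rho polynorm_sq; exact: le_trans (frob2_Qmat _ _) (sum_le_pn2 _ _).
have hh : (size h <= n.-1)%N.
  apply: (leq_trans (size_polyD _ _)); rewrite geq_max size_polyN hqs andbT.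
  by rewrite size_map_poly.
have b3 : `|qf v (Qmat n (h * F))| <= (n.-1)%:R * delta * polynorm F * vn2 v.
  rewrite (poly_expand hh) mulr_suml.
  rewrite (big_morph (Qmat n) (@QmatD _ n) (Qmat0 _ n)).
  rewrite (big_morph (qf v) (qfD v) (qf0 v)).
  apply: (le_trans (ler_norm_sum _ _ _)).
  apply: (@le_trans _ _ (\sum_(i < n.-1) delta * polynorm F * vn2 v)).
    apply: ler_sum => i _; rewrite -scalerAl QmatZ qfZ normrM -mulrA.
    apply: ler_pM => //.
      by rewrite /h coefB coef_map; exact: hqc _ (ltn_ord i).
    apply: qf_bound; first exact: polynorm_ge0.
    rewrite polynorm_sq; exact: le_trans (frob2_Qmat _ _) (sum_shift_le _ _ _).
  by rewrite sum_const1 !mulrA.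
have hFn : 0 <= polynorm F := polynorm_ge0 F.
have key : n%:R * delta + (n.-1)%:R * delta * polynorm F < sigma - rho.
  have [n0|npos] := posnP n.
    have e0 : (n%:R : R) = 0 by rewrite n0.
    have e1 : ((n.-1)%:R : R) = 0 by rewrite n0.
    move: hdelt; rewrite e0 e1 !mul0r add0r invr0 mulr0 => /(lt_trans hdel); by rewrite ltxx.
  have hs : 1 <= Num.sqrt (n%:R : R) by rewrite -{1}sqrtr1; apply: ler_wsqrtr; rewrite ler1n.
  have hden : 0 < n%:R + n.-1%:R * Num.sqrt n%:R * polynorm F.
    by rewrite ltr_wpDr ?ltr0n // !mulr_ge0 ?ler0n ?sqrtr_ge0.
  move: hdelt; rewrite ltr_pdivlMr // -/F -/G -/r -/rho => hd.
  have : (n.-1)%:R * delta * polynorm F <= (n.-1)%:R * Num.sqrt n%:R * polynorm F * delta.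
    have hs' : 0 <= Num.sqrt (n%:R : R) - 1 by rewrite subr_ge0.
    have := mulr_ge0 (mulr_ge0 (mulr_ge0 (ler0n R n.-1) hFn) (ltW hdel)) hs'.
    move=> hx; clear -hx; nra.
  move=> hy; clear -hd hy; nra.
rewrite qfE eQR qf4.
move: b1 b2 b3; rewrite !ler_norml => /andP[b1 _] /andP[_ b2] /andP[_ b3].
have : 0 < (sigma - rho - (n%:R * delta + (n.-1)%:R * delta * polynorm F)) * vn2 v.
  by rewrite mulr_gt0 // subr_gt0.
move=> hz; rewrite !mulrBl mulrDl in hz.
clear -hz b0 b1 b2 b3; lra.
Qed.
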